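(* In the setting described in the context (assuming (F1) and (F2)), for every $t\in\mathbb N\cup\{0\}$, $$\|z(t)-1_n\otimes\bar w(t)\|_{\pi\otimes1_d}\le\delta\|w(t)-n\pi\otimes\bar w(t)\|_{\pi\otimes1_d}+\delta\|1_n-n\pi\|_\pi\sigma_W^t\big(\|\bar w(t)-w_*\|+\|w_*\|\big).$$
   Context: $G=(V,E)$ directed on $\{1,\dots,n\}$, self-loop at each vertex, strongly connected; $d_j=|\{i:(j,i)\in E\}|$, $W_{ij}=1/d_j$ if $(j,i)\in E$, else $0$. $\pi$: $W\pi=\pi$, $\pi_i>0$, $\sum\pi_i=1$; $W^\infty=\pi1_n^\top$. $\|x\|_\pi=(\sum_ix_i^2/\pi_i)^{1/2}$ on $\mathbb R^n$, $|||\cdot|||_\pi$ the induced operator norm, $\sigma_W=|||W-W^\infty|||_\pi$ (known $<1$). On $\mathbb R^{nd}$, $\|x\|_{\pi\otimes1_d}=(\sum_i\|x_i\|^2/\pi_i)^{1/2}$. $v\otimes u=\mathrm{col}(v_1u,\dots,v_nu)$. $f_i:\mathbb R^d\to\mathbb R$, $f=\frac1n\sum f_i$; (F1) each $\nabla f_i$ is $L_i$-Lipschitz, $L=\max L_i$; (F2) $f$ is $\beta$-strongly convex; $w_*$ is the minimizer of $f$. $\nabla F(x)=\mathrm{col}(\nabla f_i(x_i))$. Algorithm with stepsize $\alpha>0$: given $w(0)\in\mathbb R^{nd}$, $y(0)=1_n$; for $t\ge0$: $z_i(t)=w_i(t)/y_i(t)$, $x_i(t)=w_i(t)-\alpha\nabla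 f_i(z_i(t))$, $w_i(t+1)=\sum_jW_{ij}x_j(t)$, $y_i(t+1)=\sum_jW_{ij}y_j(t)$. $z(t)=\mathrm{col}(z_i(t))$, $\bar w(t)=\frac1n\sum_iw_i(t)$, $\delta=\sup_{t\ge0}\max_i1/y_i(t)$. *)

(* Defs.v *)
From HB Require Import structures.
From mathcomp Require Import all_boot all_order all_algebra.
From mathcomp Require Import all_classical all_reals all_analysis.
Set Implicit Arguments. Unset Strict Implicit. Unset Printing Implicit Defensive.
Import Order.TTheory GRing.Theory Num.Theory.
Import numFieldNormedType.Exports.
Local Open Scope classical_set_scope.
Local Open Scope ring_scope.

Section Defs.
Variable R : realType.

Definition dotr (d : nat) (u v : 'rV[R]_d) : R := \sum_(k < d) u 0 k * v 0 k.
Definition enorm (d : nat) (u : 'rV[R]_d) : R := Num.sqrt (dotr u u).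

(* Graph data: E j i means (j,i) \in E.  Out-degree d_j = #{i | (j,i) \in E}. *)
Definition outdeg (n : nat) (E : rel 'I_n) (j : 'I_n) : nat := #|[set i | E j i]|.
Definition mixW (n : nat) (E : rel 'I_n) : 'M[R]_n :=
  \matrix_(i, j) (if E j i then (outdeg E j)%:R^-1 else 0).

Definition Winf (n : nat) (pi : 'cV[R]_n) : 'M[R]_n := \matrix_(i, j) pi i 0.

Definition normpi (n : nat) (pi x : 'cV[R]_n) : R :=
  Num.sqrt (\sum_(i < n) x i 0 ^+ 2 / pi i 0).

Definition opnormpi (n : nat) (pi : 'cV[R]_n) (A : 'M[R]_n) : R :=
  sup [set normpi pi (A *m x) / normpi pi x | x in [set x : 'cV[R]_n | x != 0]].

(* Elements of R^{nd} = col(x_1,...,x_n), x_i in R^d, stored as n x d matrices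
   whose i-th row is x_i. ||x||_{pi (x) 1_d} = (sum_i ||x_i||^2/pi_i)^{1/2}. *)
Definition normpid (n d : nat) (pi : 'cV[R]_n) (X : 'M[R]_(n, d)) : R :=
  Num.sqrt (\sum_(i < n) enorm (row i X) ^+ 2 / pi i 0).

Definition kron (n d : nat) (v : 'cV[R]_n) (u : 'rV[R]_d) : 'M[R]_(n, d) :=
  \matrix_(i, k) (v i 0 * u 0 k).

Definition ones (n : nat) : 'cV[R]_n := \col_(i < n) 1.

Definition favg (n d : nat) (f : 'I_n -> 'rV[R]_d -> R) (x : 'rV[R]_d) : R :=
  n%:R^-1 * \sum_(i < n) f i x.

Definition strongly_convex (d : nat) (beta : R) (f : 'rV[R]_d -> R) : Prop :=
  0 < beta /\
  forall (x y : 'rV[R]_d) (lam : R), 0 <= lam <= 1 ->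
    f (lam *: x + (1 - lam) *: y) <=
      lam * f x + (1 - lam) * f y
      - beta / 2 * lam * (1 - lam) * enorm (x - y) ^+ 2.

Definition is_gradient (d : nat) (f : 'rV[R]_d -> R) (g : 'rV[R]_d -> 'rV[R]_d) : Prop :=
  forall x, differentiable f x /\ forall v, 'd f x v = dotr (g x) v.

Definition zof (n d : nat) (w : 'M[R]_(n, d)) (y : 'cV[R]_n) : 'M[R]_(n, d) :=
  \matrix_(i, k) (w i k / y i 0).

Fixpoint alg_state (n d : nat) (W : 'M[R]_n) (g : 'I_n -> 'rV[R]_d -> 'rV[R]_d)
    (alpha : R) (w0 : 'M[R]_(n, d)) (t : nat) : 'M[R]_(n, d) * 'cV[R]_n :=
  match t with
  | 0 => (w0, ones n)
  | t'.+1 =>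
      let s := alg_state W g alpha w0 t' in
      let z := zof s.1 s.2 in
      let x := s.1 - alpha *: (\matrix_(i, k) (g i (row i z) 0 k)) in
      (W *m x, W *m s.2)
  end.

Definition wbar (n d : nat) (w : 'M[R]_(n, d)) : 'rV[R]_d :=
  n%:R^-1 *: \sum_(i < n) row i w.

End Defs.

(* Main.v *)
Require Import Defs.
From HB Require Import structures.
From mathcomp Require Import all_boot all_order all_algebra.
From mathcomp Require Import all_classical all_reals all_analysis.
From mathcomp Require Import ring lra.
Import Order.TTheory GRing.Theory Num.Theory.
Import numFieldNormedType.Exports.
Set Implicit Arguments. Unset Strict Implicit. Unset Printing Implicit Defensive.
Local Open Scope ring_scope.

Section Helpers.
Variable R : realType.

Definition Nw (I : finType) (c u : I -> R) := Num.sqrt (\sum_i c i * u i ^+ 2).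

Lemma Nw_ge0 (I : finType) (c u : I -> R) : 0 <= Nw c u.
Proof. exact: sqrtr_ge0. Qed.

Lemma CSw (I : finType) (c a b : I -> R) : (forall i, 0 <= c i) ->
  (\sum_i c i * a i * b i) ^+ 2 <= (\sum_i c i * a i ^+ 2) * (\sum_i c i * b i ^+ 2).
Proof.
move=> c0.
set A := \sum_i c i * a i ^+ 2; set B := \sum_i c i * b i ^+ 2;
set C := \sum_i c i * a i * b i.
have Bge0 : 0 <= B by apply: sumr_ge0 => i _; rewrite mulr_ge0 // sqr_ge0.
have e : \sum_i c i * (B * a i - C * b i)^+2 = B^+2 * A - 2*B*C*C + C^+2 * B.
  transitivity (\sum_i (B^+2 * (c i * a i ^+2) - (2*B*C) * (c i * a i * b i)
       + C^+2 * (c i * b i ^+2))).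
    by apply: eq_bigr => i _; ring.
  by rewrite big_split sumrB /= -!mulr_sumr.
have h : 0 <= B^+2 * A - 2*B*C*C + C^+2 * B.
  by rewrite -e; apply: sumr_ge0 => i _; rewrite mulr_ge0 // sqr_ge0.
move: Bge0; rewrite le_eqVlt => /orP [/eqP B0 | Bpos].
  have C0 : C = 0.
    have hb : forall i, c i * b i ^+ 2 = 0.
      move=> i; apply: (@psumr_eq0P _ _ predT (fun i => c i * b i ^+ 2)) => //.
      by move=> j _; rewrite mulr_ge0 // sqr_ge0.
    rewrite /C; apply: big1 => i _.
    by have := hb i => /eqP; rewrite mulf_eq0 sqrf_eq0 => /orP [/eqP -> | /eqP ->];
      rewrite ?mul0r ?mulr0.
  by rewrite C0 -B0 expr0n /= mulr0.
have h2 : 0 <= B * (A * B - C ^+ 2).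
  by have -> : B * (A * B - C ^+ 2) = B^+2 * A - 2*B*C*C + C^+2 * B by ring.
by move: h2; rewrite pmulr_rge0 // subr_ge0.
Qed.

Lemma Nw_ext (I : finType) (c u v : I -> R) : (forall i, u i = v i) -> Nw c u = Nw c v.
Proof. by move=> h; rewrite /Nw; congr Num.sqrt; apply: eq_bigr => i _; rewrite h. Qed.

Lemma Nw_triangle (I : finType) (c u v : I -> R) : (forall i, 0 <= c i) ->
  Nw c (fun i => u i + v i) <= Nw c u + Nw c v.
Proof.
move=> c0; rewrite /Nw.
set A := \sum_i c i * u i ^+ 2; set B := \sum_i c i * v i ^+ 2;
set C := \sum_i c i * u i * v i.
have Age0 : 0 <= A by apply: sumr_ge0 => i _; rewrite mulr_ge0 // sqr_ge0.
have Bge0 : 0 <= B by apply: sumr_ge0 => i _; rewrite mulr_ge0 // sqr_ge0.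
have e : \sum_i c i * (u i + v i) ^+ 2 = A + 2 * C + B.
  transitivity (\sum_i (c i * u i ^+ 2 + 2 * (c i * u i * v i) + c i * v i ^+ 2)).
    by apply: eq_bigr => i _; ring.
  by rewrite !big_split /= -mulr_sumr.
have hC : C <= Num.sqrt A * Num.sqrt B.
  apply: (le_trans (ler_norm C)).
  rewrite -sqrtr_sqr -sqrtrM //.
  by apply: ler_wsqrtr; apply: CSw.
rewrite e.
have hs : 0 <= Num.sqrt A + Num.sqrt B by rewrite addr_ge0 ?sqrtr_ge0.
rewrite -(ger0_norm hs) -sqrtr_sqr.
apply: ler_wsqrtr.
have -> : (Num.sqrt A + Num.sqrt B) ^+ 2 = Num.sqrt A ^+ 2 + 2 * (Num.sqrt A * Num.sqrt B) + Num.sqrt B ^+ 2 by ring.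
rewrite !sqr_sqrtr //.
lra.
Qed.

Lemma Nw_scale (I : finType) (c s u : I -> R) (del : R) : (forall i, 0 <= c i) ->
  0 <= del -> (forall i, `|s i| <= del) ->
  Nw c (fun i => s i * u i) <= del * Nw c u.
Proof.
move=> c0 d0 hs; rewrite /Nw.
rewrite -(ger0_norm d0) -sqrtr_sqr -sqrtrM ?sqr_ge0 //.
apply: ler_wsqrtr; rewrite mulr_sumr; apply: ler_sum => i _.
have -> : c i * (s i * u i) ^+ 2 = s i ^+ 2 * (c i * u i ^+ 2) by ring.
apply: ler_wpM2r; first by rewrite mulr_ge0 // sqr_ge0.
have := hs i; rewrite ler_norml => /andP [h1 h2].
rewrite -subr_ge0.
have -> : del ^+ 2 - s i ^+ 2 = (del - s i) * (del + s i) by ring.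
apply: mulr_ge0; lra.
Qed.

Lemma Nw_pair (I J : finType) (c u : I -> R) (v : J -> R) : (forall i, 0 <= c i) ->
  Nw (fun p : I * J => c p.1) (fun p => u p.1 * v p.2) = Nw c u * Nw (fun _ => 1) v.
Proof.
move=> c0; rewrite /Nw -sqrtrM; last by apply: sumr_ge0 => i _; rewrite mulr_ge0 // sqr_ge0.
congr Num.sqrt.
rewrite -(pair_bigA _ (fun i j => c i * (u i * v j) ^+ 2)) /= mulr_suml.
apply: eq_bigr => i _; rewrite mulr_sumr; apply: eq_bigr => j _; ring.
Qed.

Lemma normpidE (n d : nat) (pi : 'cV[R]_n) (X : 'M[R]_(n, d)) :
  normpid pi X = Nw (fun p : 'I_n * 'I_d => (pi p.1 0)^-1) (fun p => X p.1 p.2).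
Proof.
rewrite /normpid /Nw; congr Num.sqrt.
rewrite -(pair_bigA _ (fun (i : 'I_n) (k : 'I_d) => (pi i 0)^-1 * X i k ^+ 2)) /=.
apply: eq_bigr => i _; rewrite /enorm sqr_sqrtr; last first.
  by apply: sumr_ge0 => k _; rewrite -expr2 sqr_ge0.
rewrite /dotr mulrC mulr_sumr; apply: eq_bigr => k _; by rewrite !mxE expr2.
Qed.

Lemma normpiE (n : nat) (pi x : 'cV[R]_n) :
  normpi pi x = Nw (fun i => (pi i 0)^-1) (fun i => x i 0).
Proof. by rewrite /normpi /Nw; congr Num.sqrt; apply: eq_bigr => i _; rewrite mulrC. Qed.

Lemma enormE (d : nat) (u : 'rV[R]_d) : enorm u = Nw (fun _ => 1) (fun k => u 0 k).
Proof. by rewrite /enorm /Nw /dotr; congr Num.sqrt; apply: eq_bigr => k _; rewrite mul1r expr2. Qed.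


Lemma normpi_ge0 n (pi x : 'cV[R]_n) : 0 <= normpi pi x.
Proof. exact: sqrtr_ge0. Qed.

Lemma normpi0 n (pi : 'cV[R]_n) : normpi pi 0 = 0.
Proof.
rewrite /normpi big1 ?sqrtr0 // => i _; by rewrite mxE expr0n /= mul0r.
Qed.

Lemma opnorm_K n (pi : 'cV[R]_n) (A : 'M[R]_n) : (forall i, 0 < pi i 0) ->
  exists2 K, 0 <= K & forall x, normpi pi (A *m x) <= K * normpi pi x.
Proof.
move=> pp.
have c0 : forall i, 0 <= (pi i 0)^-1 by move=> i; rewrite invr_ge0 ltW.
set K2 := \sum_i (pi i 0)^-1 * \sum_j (pi j 0)^-1 * (A i j * pi j 0) ^+ 2.
have K2ge0 : 0 <= K2.
  apply: sumr_ge0 => i _; apply: mulr_ge0 => //.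
  by apply: sumr_ge0 => j _; rewrite mulr_ge0 // sqr_ge0.
exists (Num.sqrt K2); first exact: sqrtr_ge0.
move=> x; rewrite !normpiE /Nw -sqrtrM //; apply: ler_wsqrtr.
rewrite mulr_suml; apply: ler_sum => i _.
rewrite -mulrA; apply: ler_wpM2l; first exact: c0.
have -> : (A *m x) i 0 = \sum_j (pi j 0)^-1 * (A i j * pi j 0) * x j 0.
  rewrite mxE; apply: eq_bigr => j _.
  by rewrite mulrCA mulVf ?mulr1 //; apply: lt0r_neq0.
exact: CSw.
Qed.

Lemma opnorm_props n (pi : 'cV[R]_n) (A : 'M[R]_n) : (0 < n)%N -> (forall i, 0 < pi i 0) ->
  0 <= opnormpi pi A /\ forall x, normpi pi (A *m x) <= opnormpi pi A * normpi pi x.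
Proof.
move=> n0 pp; have [K K0 hK] := opnorm_K A pp.
rewrite /opnormpi; set S := (X in sup X).
have hub : has_ubound S.
  exists K => r [x _ <-].
  have [->|np] := eqVneq (normpi pi x) 0; first by rewrite invr0 mulr0.
  have npos : 0 < normpi pi x by rewrite lt_neqAle eq_sym np normpi_ge0.
  by rewrite ler_pdivrMr.
split.
  pose i0 : 'I_n := Ordinal n0.
  have o0 : ones R n != 0.
    apply/eqP => /matrixP /(_ i0 0); rewrite !mxE => /eqP; by rewrite oner_eq0.
  have := ub_le_sup hub (ex_intro2 _ _ (ones R n) o0 erefl).
  apply: le_trans; by rewrite divr_ge0 // normpi_ge0.
move=> x.
have [e|np] := eqVneq (normpi pi x) 0.
  by rewrite e mulr0; have := hK x; rewrite e mulr0.
have x0 : x != 0 by apply: contra_neq np => ->; exact: normpi0.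
have npos : 0 < normpi pi x by rewrite lt_neqAle eq_sym np normpi_ge0.
have := ub_le_sup hub (ex_intro2 _ _ x x0 erefl).
by rewrite ler_pdivrMr.
Qed.


Lemma W_colsum n (E : rel 'I_n) : (forall i, E i i) -> forall j, \sum_i mixW R E i j = 1.
Proof.
move=> Eii j.
rewrite (eq_bigr (fun i => if E j i then (outdeg E j)%:R^-1 else 0)); last by move=> i _; rewrite mxE.
rewrite -big_mkcond /= sumr_const.
set m := (X in _ *+ X).
have -> : m = outdeg E j.
  rewrite /m /outdeg; apply: eq_card => i; apply/idP/idP; rewrite in_setE //.
have hpos : (0 < outdeg E j)%N.
  by rewrite /outdeg; apply/card_gt0P; exists j; rewrite in_setE; exact: Eii.
by rewrite -[LHS]mulr_natr mulVf // pnatr_eq0 -lt0n.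
Qed.

Lemma W_ge0 n (E : rel 'I_n) i j : 0 <= mixW R E i j.
Proof. by rewrite mxE; case: (E j i); rewrite ?invr_ge0 ?ler0n. Qed.

Lemma Wy_pos n (E : rel 'I_n) (y : 'cV[R]_n) : (forall i, E i i) ->
  (forall i, 0 < y i 0) -> forall i, 0 < (mixW R E *m y) i 0.
Proof.
move=> Eii yp i; rewrite mxE (bigD1 i) //=.
have h1 : 0 < mixW R E i i * y i 0.
  rewrite mulr_gt0 // mxE Eii invr_gt0 ltr0n /outdeg.
  by apply/card_gt0P; exists i; rewrite in_setE; exact: Eii.
have h2 : 0 <= \sum_(j | j != i) mixW R E i j * y j 0.
  by apply: sumr_ge0 => j _; rewrite mulr_ge0 ?W_ge0 // ltW.
lra.
Qed.

Lemma Wy_sum n (E : rel 'I_n) (y : 'cV[R]_n) : (forall i, E i i) ->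
  \sum_i (mixW R E *m y) i 0 = \sum_i y i 0.
Proof.
move=> Eii.
rewrite (eq_bigr (fun i => \sum_j mixW R E i j * y j 0)); last by move=> i _; rewrite mxE.
rewrite exchange_big; apply: eq_bigr => j _.
by rewrite -mulr_suml W_colsum // mul1r.
Qed.

End Helpers.
Unset Implicit Arguments.
Set Strict Implicit.

Theorem lemma5p1 (R : realType) (n d : nat) (E : rel 'I_n)
  (pi : 'cV[R]_n)
  (f : 'I_n -> 'rV[R]_d -> R) (g : 'I_n -> 'rV[R]_d -> 'rV[R]_d)
  (Ls : 'I_n -> R) (beta : R) (wstar : 'rV[R]_d)
  (alpha : R) (w0 : 'M[R]_(n, d)) (delta : R) :
  (0 < n)%N ->
  (* self-loop at each vertex, strongly connected *)
  (forall i, E i i) ->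
  (forall i j, connect E i j) ->
  (* pi : W pi = pi, pi_i > 0, sum pi_i = 1 *)
  mixW R E *m pi = pi ->
  (forall i, 0 < pi i 0) ->
  \sum_(i < n) pi i 0 = 1 ->
  (* g i is the gradient of f i *)
  (forall i, is_gradient (f i) (g i)) ->
  (* (F1) *)
  (forall i x y, enorm (g i x - g i y) <= Ls i * enorm (x - y)) ->
  (* (F2) *)
  strongly_convex beta (favg f) ->
  (* w_* is the minimizer of f *)
  (forall x, favg f wstar <= favg f x) ->
  0 < alpha ->
  (* delta = sup_{t >= 0} max_i 1 / y_i(t) *)
  (forall t i, ((alg_state (mixW R E) g alpha w0 t).2 i 0)^-1 <= delta) ->
  (forall b, (forall t i, ((alg_state (mixW R E) g alpha w0 t).2 i 0)^-1 <= b) ->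
     delta <= b) ->
  forall t : nat,
  let W := mixW R E in
  let w := (alg_state W g alpha w0 t).1 in
  let y := (alg_state W g alpha w0 t).2 in
  let z := zof w y in
  let sigmaW := opnormpi pi (W - Winf pi) in
  normpid pi (z - kron (ones R n) (wbar w))
  <= delta * normpid pi (w - kron (n%:R *: pi) (wbar w))
     + delta * normpi pi (ones R n - n%:R *: pi) * sigmaW ^+ t
       * (enorm (wbar w - wstar) + enorm wstar).
Proof.
move=> n0 Eii _ Wpi pipos pisum _ _ _ _ _ dub _ t; cbv zeta.
set sigmaW := opnormpi pi (mixW R E - Winf pi).
pose st k := alg_state (mixW R E) g alpha w0 k.
have stS : forall k, (st k.+1).2 = mixW R E *m (st k).2 by [].
have ypos : forall k i, 0 < (st k).2 i 0.
  elim=> [|k IH] i; first by rewrite /= mxE ltr01.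
  by rewrite stS; apply: Wy_pos.
have ysum : forall k, \sum_i (st k).2 i 0 = n%:R.
  elim=> [|k IH]; last by rewrite stS Wy_sum.
  by rewrite /= (eq_bigr (fun _ => 1)) ?sumr_const ?card_ord // => i _; rewrite mxE.
have vrec : forall k, (st k.+1).2 - n%:R *: pi = (mixW R E - Winf pi) *m ((st k).2 - n%:R *: pi).
  move=> k.
  have h0 : Winf pi *m ((st k).2 - n%:R *: pi) = 0.
    apply/matrixP => i j; rewrite (ord1 j) !mxE.
    rewrite (eq_bigr (fun l => pi i 0 * ((st k).2 l 0 - n%:R * pi l 0))); last first.
      by move=> l _; rewrite !mxE.
    by rewrite -mulr_sumr sumrB -mulr_sumr ysum pisum mulr1 subrr mulr0.
  by rewrite mulmxBl h0 subr0 mulmxBr -scalemxAr Wpi stS.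
have [sig0 sigle] := opnorm_props (mixW R E - Winf pi) n0 pipos.
have vbound : forall k, normpi pi ((st k).2 - n%:R *: pi) <= sigmaW ^+ k * normpi pi (ones R n - n%:R *: pi).
  elim=> [|k IH]; first by rewrite expr0 mul1r.
  rewrite vrec; apply: le_trans (sigle _) _.
  by rewrite exprS -mulrA; apply: ler_wpM2l.
have del0 : 0 <= delta.
  pose i0 : 'I_n := Ordinal n0.
  by apply: le_trans (dub 0%N i0); rewrite invr_ge0 ltW.
set w := (alg_state (mixW R E) g alpha w0 t).1.
set y := (alg_state (mixW R E) g alpha w0 t).2.
set wb := wbar w.
have yp : forall i, 0 < y i 0 := ypos t.
have yd : forall i, (y i 0)^-1 <= delta := dub t.
pose c1 := fun i : 'I_n => (pi i 0)^-1.
have c1ge0 : forall i, 0 <= c1 i by move=> i; rewrite /c1 invr_ge0 ltW.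
pose X := w - kron (n%:R *: pi) wb.
pose v := y - n%:R *: pi.
have e1 : normpid pi (zof w y - kron (ones R n) wb) =
    Nw (fun p : 'I_n * 'I_d => c1 p.1)
       (fun p => (y p.1 0)^-1 * X p.1 p.2 + (- ((y p.1 0)^-1 * v p.1 0)) * wb 0 p.2).
  rewrite normpidE; apply: Nw_ext => -[i k] /=; rewrite /X /v !mxE.
  have := lt0r_neq0 (yp i) => yn0.
  set q := (n%:R^-1 * _); by field.
rewrite e1.
apply: le_trans (Nw_triangle _ _ _) _; first by move=> p; exact: c1ge0.
apply: lerD.
  apply: le_trans (@Nw_scale _ _ (fun p => c1 p.1) (fun p => (y p.1 0)^-1) (fun p => X p.1 p.2) delta _ del0 _) _.
  - by move=> p; exact: c1ge0.
  - by move=> p; rewrite ger0_norm; [exact: yd | rewrite invr_ge0; exact: ltW (yp _)].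
  by rewrite normpidE; exact: lexx.
have e2 : Nw (fun p : 'I_n * 'I_d => c1 p.1) (fun p => - ((y p.1 0)^-1 * v p.1 0) * wb 0 p.2)
    = Nw c1 (fun i => - (y i 0)^-1 * v i 0) * enorm wb.
  rewrite enormE -Nw_pair; last exact: c1ge0.
  by apply: Nw_ext => p; rewrite !mulNr.
rewrite e2.
have h1 : Nw c1 (fun i => - (y i 0)^-1 * v i 0) <=
    delta * (sigmaW ^+ t * normpi pi (ones R n - n%:R *: pi)).
  apply: le_trans (@Nw_scale _ _ c1 (fun i => - (y i 0)^-1) (fun i => v i 0) delta c1ge0 del0 _) _.
    by move=> i; rewrite normrN ger0_norm; [exact: yd | rewrite invr_ge0; exact: ltW (yp _)].
  apply: ler_wpM2l => //.
  by have := vbound t; rewrite normpiE.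
have h2 : enorm wb <= enorm (wb - wstar) + enorm wstar.
  rewrite !enormE.
  rewrite (@Nw_ext R _ (fun _ => 1) (fun k => wb 0 k) (fun k => (wb - wstar) 0 k + wstar 0 k)); last first.
    by move=> k; rewrite !mxE subrK.
  by apply: Nw_triangle => k; exact: ler01.
have -> : delta * normpi pi (ones R n - n%:R *: pi) * sigmaW ^+ t * (enorm (wb - wstar) + enorm wstar)
  = delta * (sigmaW ^+ t * normpi pi (ones R n - n%:R *: pi)) * (enorm (wb - wstar) + enorm wstar) by ring.
apply: ler_pM => //; first exact: Nw_ge0.
exact: sqrtr_ge0.
Qed.
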